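(* Let $d\ge 2$ and $N\ge 2$ be integers, let $X=\{x^1,\dots,x^N\}\subseteq\mathbb{R}^d$, and let $C\subseteq\mathbb{R}^d$ be a proper closed convex cone. Then: (i) For every $w\in C^+\setminus\{0\}$, both $r_{X,w}$ and $r_{X,C}$ are ranking functions on $X$ with respect to $\leq_C$: for all $y,z\in X$, $y\leq_C z$ implies $r_{X,w}(y)\le r_{X,w}(z)$ and $r_{X,C}(y)\le r_{X,C}(z)$. Both are moreover strict: if $\operatorname{int} C\neq\varnothing$, then for all $y,z\in X$, $y<_C z$ implies $r_{X,w}(y)<r_{X,w}(z)$ and $r_{X,C}(y)<r_{X,C}(z)$. (ii) For every invertible matrix $A\in\mathbb{R}^{d\times d}$ and every $b\in\mathbb{R}^d$, $$\forall z\in\mathbb{R}^d:\quad r_{AX+b,\,AC}(Az+b)=r_{X,C}(z),$$ where $AX+b=\{Ax^1+b,\dots,Ax^N+b\}$ and $AC=\{Ac\mid c\in C\}$. (iii) If $D\subseteq\mathbb{R}^d$ is a closed convex cone with $C\subseteq D$, then $r_{X,C}(z)\le r_{X,D}(z)$ for all $z\in\mathbb{R}^d$. In particular, $r_{X,C}(z)\le r_{X,H^+(w)}(z)$ for all $w\in C^+$ and all $z\in\mathbb{R}^d$.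
   Context: A proper closed convex cone $C\subseteq\mathbb{R}^d$ is a closed set with $sC=C$ for all $s\ge 0$, $C+C=C$, and $C\notin\{\varnothing,\mathbb{R}^d\}$. It induces the preorder $y\leq_C z$ iff $z-y\in C$, and (when $\operatorname{int} C\neq\varnothing$) $y<_C z$ iff $z-y\in\operatorname{int} C$. The dual cone of a cone $K$ is $K^+=\{v\in\mathbb{R}^d\mid \forall z\in K: v^\top z\ge 0\}$. For $w\in\mathbb{R}^d$, $H^+(w)=\{z\in\mathbb{R}^d\mid w^\top z\ge 0\}$ (so $H^+(0)=\mathbb{R}^d$). For a finite set $X\subseteq\mathbb{R}^d$, a nonzero $w$, and a closed convex cone $K$, define for $z\in\mathbb{R}^d$ $$r_{X,w}(z)=\#\{x\in X\mid x\in z-H^+(w)\}=\#\{x\in X\mid w^\top x\le w^\top z\},\qquad r_{X,K}(z)=\min_{w\in K^+}\#\{x\in X\mid x\in z-H^+(w)\},$$ where $\#$ denotes cardinality. A ranking function on $X$ with respect to $\leq_C$ is a map $r:X\to\mathbb{R}$ with $y\leq_C z\Rightarrow r(y)\le r(z)$ for $y,z\in X$; it is strict if $y<_C z\Rightarrow r(y)<r(z)$. *)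

(* Defs.v *)
(* Points of R^d are column vectors 'cV[R]_d,
   R : realType; topology on 'cV[R]_d is the library's (product/max-norm) one. *)
From HB Require Import structures.
From mathcomp Require Import all_boot all_order all_algebra.
From mathcomp Require Import all_classical all_reals all_analysis.
Set Implicit Arguments. Unset Strict Implicit. Unset Printing Implicit Defensive.
Import Order.TTheory GRing.Theory Num.Theory.
Import numFieldTopology.Exports numFieldNormedType.Exports.
Local Open Scope classical_set_scope.
Local Open Scope ring_scope.

Section Defs.
Variables (R : realType) (d : nat).
Notation vec := 'cV[R]_d.

Definition dotp (v z : vec) : R := \sum_(i < d) v i 0 * z i 0.

Definition closed_convex_cone (C : set vec) : Prop :=
  [/\ closed C, C !=set0,
      (forall s c, 0 <= s -> C c -> C (s *: c)) &
      (forall c1 c2, C c1 -> C c2 -> C (c1 + c2))].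

Definition proper_cone (C : set vec) : Prop :=
  closed_convex_cone C /\ C <> setT.

Definition cone_le (C : set vec) (y z : vec) : Prop := C (z - y).
Definition cone_lt (C : set vec) (y z : vec) : Prop := (interior C) (z - y).

Definition dual_cone (K : set vec) : set vec :=
  [set v | forall z, K z -> 0 <= dotp v z].

Definition halfspace (w : vec) : set vec := [set z | 0 <= dotp w z].

Definition mx_image (A : 'M[R]_d) (K : set vec) : set vec :=
  (fun c => A *m c) @` K.

Variable N : nat.
(* X = {x 1, ..., x N}, given by an (injective) enumeration x *)

Definition rank_w (x : 'I_N -> vec) (w z : vec) : nat :=
  #|[set i : 'I_N | dotp w (x i) <= dotp w z]|.

(* r_{X,K}(z) = min_{w in K^+} r_{X,w}(z); the counts lie in {0..N}, so this is
   the least n <= N attained by some w in K^+ (N is attained by w = 0). *)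
Definition rank_K (x : 'I_N -> vec) (K : set vec) (z : vec) : nat :=
  \big[minn/N]_(n < N.+1 |
      `[< exists w, dual_cone K w /\ rank_w x w z = n >]) (n : nat).

End Defs.

(* Main.v *)
Require Import Defs.
From HB Require Import structures.
From mathcomp Require Import all_boot all_order all_algebra.
From mathcomp Require Import all_classical all_reals all_analysis.
From mathcomp Require Import ring lra.
Import Order.TTheory GRing.Theory Num.Theory.
Import numFieldTopology.Exports numFieldNormedType.Exports.
Local Open Scope classical_set_scope.
Local Open Scope ring_scope.

Lemma bigmin_le (I : eqType) (s : seq I) (P : pred I) (F : I -> nat) j idx :
  j \in s -> P j -> (\big[minn/idx]_(i <- s | P i) F i <= F j)%N.
Proof.
elim: s => // a s IH; rewrite in_cons big_cons => /orP [/eqP-> Pj | js Pj].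
  by rewrite Pj geq_minl.
case: ifP => _; last exact: IH.
exact: leq_trans (geq_minr _ _) (IH js Pj).
Qed.

Section Helpers.
Context {R : realType} {d N : nat}.
Notation vec := 'cV[R]_d.
Implicit Types (x : 'I_N -> vec) (K : set vec).

Lemma dotpE (v z : vec) : dotp v z = (v^T *m z) 0 0.
Proof. by rewrite /dotp !mxE; apply: eq_bigr => i _; rewrite mxE. Qed.

Lemma dotpD (v y z : vec) : dotp v (y + z) = dotp v y + dotp v z.
Proof. by rewrite !dotpE mulmxDr mxE. Qed.

Lemma dotpB (v y z : vec) : dotp v (y - z) = dotp v y - dotp v z.
Proof. by rewrite !dotpE mulmxBr !mxE. Qed.

Lemma dotpZ (v z : vec) (t : R) : dotp v (t *: z) = t * dotp v z.
Proof. by rewrite !dotpE -scalemxAr mxE. Qed.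

Lemma dotpM (v z : vec) (A : 'M[R]_d) : dotp v (A *m z) = dotp (A^T *m v) z.
Proof. by rewrite !dotpE trmx_mul trmxK mulmxA. Qed.

Lemma dotp_gt0 (w : vec) : w != 0 -> 0 < dotp w w.
Proof.
move=> w0; rewrite lt0r; apply/andP; split; last first.
  by rewrite /dotp sumr_ge0 // => i _; rewrite -expr2 sqr_ge0.
apply: contra w0 => /eqP /psumr_eq0P H; apply/eqP/matrixP => i j.
rewrite (ord1 j) mxE; have := H (fun k _ => sqr_ge0 (w k 0)) i isT.
by rewrite -expr2 => /eqP; rewrite sqrf_eq0 => /eqP.
Qed.

Lemma rank_w_le x w z : (rank_w x w z <= N)%N.
Proof. by rewrite /rank_w (leq_trans (max_card _)) // card_ord. Qed.

Lemma dot0p (z : vec) : dotp 0 z = 0.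
Proof. by rewrite /dotp big1 // => k _; rewrite mxE mul0r. Qed.

Lemma rank_wE x w z :
  rank_w x w z = #|[pred i | dotp w (x i) <= dotp w z]|.
Proof. by apply: eq_card => i; rewrite /in_mem /= /in_set asboolb. Qed.

Lemma rank_w0 x z : rank_w x 0 z = N.
Proof.
rewrite rank_wE -[RHS](card_ord N); apply: eq_card => i.
by rewrite !inE !dot0p lexx.
Qed.

Lemma dual0 K : dual_cone K 0.
Proof. by move=> z _; rewrite dot0p. Qed.

Lemma rank_K_le x K z w : dual_cone K w -> (rank_K x K z <= rank_w x w z)%N.
Proof.
move=> Kw; rewrite /rank_K.
have lt : (rank_w x w z < N.+1)%N by rewrite ltnS rank_w_le.
apply: (@bigmin_le _ _ _ _ (Ordinal lt)); first exact: mem_index_enum.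
by apply/asboolP; exists w.
Qed.

Lemma rank_K_att x K z :
  exists w, dual_cone K w /\ rank_w x w z = rank_K x K z.
Proof.
rewrite /rank_K; apply: (big_ind (fun v => exists w, dual_cone K w /\ rank_w x w z = v)).
- by exists 0; split; [exact: dual0 | exact: rank_w0].
- move=> a b Ha Hb; rewrite /minn; by case: ifP.
- by move=> i /asboolP.
Qed.

Lemma rank_K_sub x K D z : K `<=` D -> (rank_K x K z <= rank_K x D z)%N.
Proof.
move=> KD; have [w [Dw <-]] := rank_K_att x D z.
apply: rank_K_le => c Kc; exact: Dw (KD _ Kc).
Qed.

Lemma rank_w_mono x w y z :
  dotp w y <= dotp w z -> (rank_w x w y <= rank_w x w z)%N.
Proof.
move=> yz; rewrite !rank_wE; apply: subset_leq_card; apply/fintype.subsetP => i.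
by rewrite !inE => /le_trans; apply.
Qed.

Lemma rank_w_strict x w i j :
  dotp w (x i) < dotp w (x j) -> (rank_w x w (x i) < rank_w x w (x j))%N.
Proof.
move=> ij; rewrite !rank_wE; apply: proper_card; apply/properP; split.
  apply/fintype.subsetP => k; rewrite !inE => /le_trans; apply; exact: ltW.
by exists j; rewrite !inE ?lexx // -ltNge.
Qed.

Lemma dual_pos K w c : dual_cone K w -> w != 0 -> interior K c -> 0 < dotp w c.
Proof.
move=> Kw w0 /nbhs_ballP [e /= e0 he].
have n1 : 0 < `|w| + 1 by rewrite ltr_pwDr // normr_ge0.
set t := e / (2 * (`|w| + 1)).
have t0 : 0 < t by rewrite divr_gt0 // mulr_gt0.
have hb : ball c e (c - t *: w).
  rewrite -ball_normE /ball_ /= opprB addrC subrK normrZ gtr0_norm //.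
  have -> : t * `|w| = e / 2 - t by rewrite /t; field; rewrite lt0r_neq0.
  lra.
have := Kw _ (he _ hb); rewrite dotpB dotpZ subr_ge0 => H.
exact: lt_le_trans (mulr_gt0 t0 (dotp_gt0 _ w0)) H.
Qed.

End Helpers.

Theorem proposition2p2 (R : realType) (d N : nat) (x : 'I_N -> 'cV[R]_d)
  (C : set 'cV[R]_d) :
  (2 <= d)%N -> (2 <= N)%N -> injective x -> proper_cone C ->
  (* (i) *)
  (forall w, dual_cone C w -> w != 0 ->
     (forall i j, cone_le C (x i) (x j) ->
        (rank_w x w (x i) <= rank_w x w (x j))%N /\
        (rank_K x C (x i) <= rank_K x C (x j))%N) /\
     (interior C !=set0 ->
      forall i j, cone_lt C (x i) (x j) ->
        (rank_w x w (x i) < rank_w x w (x j))%N /\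
        (rank_K x C (x i) < rank_K x C (x j))%N)) /\
  (* (ii) *)
  (forall (A : 'M[R]_d) (b : 'cV[R]_d), A \in unitmx ->
     forall z : 'cV[R]_d,
       rank_K (fun i => A *m x i + b) (mx_image A C) (A *m z + b)
       = rank_K x C z) /\
  (* (iii) *)
  ((forall D : set 'cV[R]_d, closed_convex_cone D -> C `<=` D ->
      forall z, (rank_K x C z <= rank_K x D z)%N) /\
   (forall w, dual_cone C w ->
      forall z, (rank_K x C z <= rank_K x (halfspace w) z)%N)).
Proof.
move=> _ _ _ _; split; [|split; [|split]].
- move=> w Cw w0; split.
    move=> i j Cij.
    have mono u : dual_cone C u -> (rank_w x u (x i) <= rank_w x u (x j))%N.
      by move=> Cu; apply: rank_w_mono; rewrite -subr_ge0 -dotpB; exact: Cu.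
    split; first exact: mono.
    have [u [Cu <-]] := rank_K_att x C (x j).
    exact: leq_trans (rank_K_le _ _ _ _ Cu) (mono _ Cu).
  move=> _ i j Cij.
  have str u : dual_cone C u -> u != 0 ->
      (rank_w x u (x i) < rank_w x u (x j))%N.
    by move=> Cu u0; apply: rank_w_strict; rewrite -subr_gt0 -dotpB; exact: dual_pos _ _ _ Cu u0 Cij.
  split; first exact: str.
  have [u [Cu <-]] := rank_K_att x C (x j).
  have [->|u0] := eqVneq u 0.
    rewrite rank_w0; apply: leq_ltn_trans (rank_K_le _ _ _ _ Cw) _.
    exact: leq_trans (str _ Cw w0) (rank_w_le _ _ _).
  exact: leq_ltn_trans (rank_K_le _ _ _ _ Cu) (str _ Cu u0).
- move=> A b Au z.
  have rw v : rank_w (fun i => A *m x i + b) v (A *m z + b) = rank_w x (A^T *m v) z.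
    rewrite !rank_wE; apply: eq_card => i; by rewrite !inE !dotpD lerD2r !dotpM.
  apply/eqP; rewrite eqn_leq; apply/andP; split.
    have [u [Cu <-]] := rank_K_att x C z.
    set v := invmx (A^T) *m u.
    have vE : A^T *m v = u by rewrite /v mulmxA mulmxV ?mul1mx // unitmx_tr.
    have Dv : dual_cone (mx_image A C) v.
      by move=> _ [c Cc <-]; rewrite dotpM vE; exact: Cu.
    by apply: leq_trans (rank_K_le _ _ _ _ Dv) _; rewrite rw vE.
  have [v [Dv <-]] := rank_K_att (fun i => A *m x i + b) (mx_image A C) (A *m z + b).
  have Cv : dual_cone C (A^T *m v).
    by move=> c Cc; rewrite -dotpM; apply: Dv; exists c.
  by rewrite rw; exact: rank_K_le.
- by move=> D _ CD z; exact: rank_K_sub.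
- move=> w Cw z; apply: rank_K_sub => c Cc; exact: Cw.
Qed.
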